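(* If $n\ge3$, then $\ker(\theta)\le FVP_n\cap FH_n$.
   Context: $FVB_n$ is the flat virtual braid group: generators $\sigma_1,\dots,\sigma_{n-1},\rho_1,\dots,\rho_{n-1}$, relations $\sigma_i\sigma_j=\sigma_j\sigma_i$, $\rho_i\rho_j=\rho_j\rho_i$, $\sigma_i\rho_j=\rho_j\sigma_i$ for $|i-j|\ge2$; $\sigma_i\sigma_{i+1}\sigma_i=\sigma_{i+1}\sigma_i\sigma_{i+1}$; $\rho_i\rho_{i+1}\rho_i=\rho_{i+1}\rho_i\rho_{i+1}$; $\rho_i\rho_{i+1}\sigma_i=\sigma_{i+1}\rho_i\rho_{i+1}$; $\rho_i^2=\sigma_i^2=1$. Let $\iota_1:FVB_n\to S_n$ send both $\sigma_i$ and $\rho_i$ to the transposition $(i,i+1)$, and $\iota_2:FVB_n\to S_n$ send $\sigma_i$ to $1$ and $\rho_i$ to $(i,i+1)$; $FVP_n=\ker\iota_1$ and $FH_n=\ker\iota_2$. $F_{2n}$ is free on $x_1,\dots,x_n,y_1,\dots,y_n$ and $\theta:FVB_n\to{\rm Aut}(F_{2n})$ is the homomorphism with $\theta(\sigma_i):x_i\mapsto x_{i+1}y_{i+1},\ x_{i+1}\mapsto x_iy_{i+1}^{-1}$ and $\theta(\rho_i):x_i\leftrightarrow x_{i+1},\ y_i\leftrightarrow y_{i+1}$, other generators fixed; automorphisms compose on the right, $(fg)(x)=g(f(x))$. *)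

(* Defs.v *)
From mathcomp Require Import all_boot all_fingroup.
Set Implicit Arguments. Unset Strict Implicit. Unset Printing Implicit Defensive.

(* ---------- Generators of FVB_n (0-based indices) ----------
   Sig i stands for sigma_{i+1}, Rho i for rho_{i+1}; valid for i+1 < n.
   Since every generator is an involution in FVB_n, every element of FVB_n
   is represented by a positive word (a list of generators). *)
Inductive gen := Sig of nat | Rho of nat.

Definition gen_idx (g : gen) : nat := match g with Sig i => i | Rho i => i end.
Definition is_rho (g : gen) : bool := match g with Rho _ => true | Sig _ => false end.
Definition valid_gen (n : nat) (g : gen) : bool := (gen_idx g).+1 < n.

(* ---------- The free group F_{2n} ----------
   A letter is (b, j): b = false means x_{j+1}, b = true means y_{j+1}.
   A signed letter is (letter, e) with e = true for the letter, false for
   its inverse.  Group elements are represented by freely reduced words. *)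
Definition letter := (bool * nat)%type.
Definition sletter := (letter * bool)%type.

Definition sinv (a : sletter) : sletter := (a.1, ~~ a.2).

Definition freduce (s : seq sletter) : seq sletter :=
  foldr (fun a acc => match acc with
                      | b :: t => if b == sinv a then t else a :: acc
                      | [::] => [:: a] end) [::] s.

Definition fsubst (f : letter -> seq sletter) (w : seq sletter) : seq sletter :=
  freduce (flatten (map (fun a => if a.2 then f a.1 else rev (map sinv (f a.1))) w)).

Definition swapn (i j : nat) : nat :=
  if j == i then i.+1 else if j == i.+1 then i else j.

Definition theta_gen (g : gen) : letter -> seq sletter :=
  match g with
  | Sig i => fun l =>
      if ~~ l.1 && (l.2 == i) then [:: ((false, i.+1), true); ((true, i.+1), true)]
      else if ~~ l.1 && (l.2 == i.+1) then [:: ((false, i), true); ((true, i.+1), false)]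
      else [:: (l, true)]
  | Rho i => fun l => [:: ((l.1, swapn i l.2), true)]
  end.

(* theta(w)(v): automorphisms compose on the right, (fg)(x) = g(f(x)),
   so the automorphism of the first letter of w is applied first. *)
Definition theta_apply (w : seq gen) (v : seq sletter) : seq sletter :=
  foldl (fun v g => fsubst (theta_gen g) v) v w.

Definition in_ker_theta (n : nat) (w : seq gen) : Prop :=
  forall l : letter, l.2 < n -> theta_apply w [:: (l, true)] = [:: (l, true)].

(* transposition (i+1, i+2) (1-based) in S_n = {perm 'I_n} *)
Definition transp (n i : nat) : {perm 'I_n} :=
  match @insub _ (fun k => k < n) _ i, @insub _ (fun k => k < n) _ i.+1 with
  | Some a, Some b => tperm a b
  | _, _ => 1%g
  end.

Definition iota1 (n : nat) (w : seq gen) : {perm 'I_n} :=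
  (\prod_(g <- w) transp n (gen_idx g))%g.

Definition iota2 (n : nat) (w : seq gen) : {perm 'I_n} :=
  (\prod_(g <- w | is_rho g) transp n (gen_idx g))%g.

(* Main.v *)
Require Import Defs.
From mathcomp Require Import all_boot all_fingroup.
From mathcomp Require Import all_algebra zify.
Import GRing.Theory.

Local Open Scope ring_scope.

Definition sgn (f : letter -> int) (a : sletter) : int :=
  if a.2 then f a.1 else - f a.1.

Definition wt (f : letter -> int) (s : seq sletter) : int :=
  \sum_(a <- s) sgn f a.

Lemma wt_cat f s t : wt f (s ++ t) = wt f s + wt f t.
Proof. by rewrite /wt big_cat. Qed.

Lemma wt_cons f a s : wt f (a :: s) = sgn f a + wt f s.
Proof. by rewrite /wt big_cons. Qed.

Lemma wt_nil f : wt f [::] = 0.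
Proof. by rewrite /wt big_nil. Qed.

Lemma wt_inv f s : wt f (rev (map sinv s)) = - wt f s.
Proof.
rewrite /wt big_rev big_map -sumrN; apply: eq_bigr => a _.
by rewrite /sgn /sinv /=; case: a.2 => //=; rewrite opprK.
Qed.

Lemma wt_freduce f s : wt f (freduce s) = wt f s.
Proof.
elim: s => [|a s IH] //=.
rewrite wt_cons -IH.
case E: (freduce s) => [|b t]; first by rewrite wt_cons.
case: (b =P sinv a) => [->|_]; last by rewrite [LHS]wt_cons.
rewrite wt_cons addrA /sgn /sinv /=; idtac; case: a.2 => /=; by rewrite ?subrr ?addNr ?add0r.
Qed.

Lemma wt_fsubst f h v :
  wt f (fsubst h v) = \sum_(a <- v) (if a.2 then wt f (h a.1) else - wt f (h a.1)).
Proof.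
rewrite /fsubst wt_freduce.
elim: v => [|a v IH]; first by rewrite big_nil /= wt_nil.
rewrite big_cons /= wt_cat IH; case: a.2 => //; by rewrite wt_inv.
Qed.

Definition fx (k : nat) (l : letter) : int := if ~~ l.1 && (l.2 == k)%N then 1 else 0.

Lemma swapnK i : involutive (swapn i).
Proof.
move=> k; rewrite /swapn.
case: (k =P i) => [->|Hi]; first by rewrite eqxx (eq_sym i.+1) ltn_eqF ?ltnSn.
case: (k =P i.+1) => [->|Hi1]; first by rewrite eqxx.
by move/eqP/negbTE: Hi => ->; move/eqP/negbTE: Hi1 => ->.
Qed.

Lemma swapn_eq i a b : (swapn i a == b) = (a == swapn i b).
Proof.
apply/eqP/eqP => [<-|->]; by rewrite swapnK.
Qed.

Lemma fx_theta g k l :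
  wt (fx k) (theta_gen g l) = fx (swapn (gen_idx g) k) l.
Proof.
case: g => i; case: l => [b m]; rewrite /theta_gen /= ?wt_cons ?wt_nil /sgn /fx /= ?addr0.
all: case: b => /=.
all: try by rewrite ?wt_cons ?wt_nil /sgn /= ?addr0 ?swapn_eq.
rewrite /swapn; case: (k =P i) => ?; case: (k =P i.+1) => ?; case: (m =P i) => ?; case: (m =P i.+1) => ?.
all: rewrite /= ?wt_cons ?wt_nil /sgn /= ?addr0.
all: repeat (case: eqP => /= ?); try lia; try done.
Qed.

Local Close Scope ring_scope.

Definition sig (w : seq gen) (k : nat) : nat :=
  foldr (fun g k => swapn (gen_idx g) k) k w.
Definition rho1 (w : seq gen) (k : nat) : nat :=
  foldl (fun k g => swapn (gen_idx g) k) k w.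
Definition tau (w : seq gen) (k : nat) : nat :=
  foldl (fun k g => if is_rho g then swapn (gen_idx g) k else k) k w.

Lemma abx_theta w v k : wt (fx k) (theta_apply w v) = wt (fx (sig w k)) v.
Proof.
elim: w v k => [|g w IH] v k; first by [].
have -> : theta_apply (g :: w) v = theta_apply w (fsubst (theta_gen g) v) by [].
rewrite IH wt_fsubst [RHS]/wt; apply: eq_bigr => a _.
by rewrite !fx_theta /sgn.
Qed.

Lemma y_theta w j : theta_apply w [:: ((true, j), true)] = [:: ((true, tau w j), true)].
Proof.
elim: w j => [|g w IH] j; first by [].
have -> : theta_apply (g :: w) [:: ((true, j), true)]
  = theta_apply w (fsubst (theta_gen g) [:: ((true, j), true)]) by [].
by case: g => i /=; rewrite IH.
Qed.

Lemma rho1_sig w k : rho1 w (sig w k) = k.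
Proof.
elim: w k => [|g w IH] k //=.
by rewrite /rho1 /= swapnK; apply: IH.
Qed.

Lemma transp_val n i (a : 'I_n) : i.+1 < n -> val (transp n i a) = swapn i (val a).
Proof.
move=> H; rewrite /transp.
case: insubP => [a0 _ Ha0|]; last by rewrite (ltn_trans (ltnSn i) H).
case: insubP => [b0 _ Hb0|]; last by rewrite H.
case: tpermP => [->|->|/eqP Ha /eqP Hb]; rewrite /swapn.
- by rewrite Ha0 eqxx.
- by rewrite Hb0 eqxx (eq_sym i.+1) ltn_eqF ?ltnSn.
- have Ha' : (val a == i) = false by apply/negbTE; rewrite -Ha0; apply: contra Ha => /eqP E; apply/eqP/val_inj.
  have Hb' : (val a == i.+1) = false by apply/negbTE; rewrite -Hb0; apply: contra Hb => /eqP E; apply/eqP/val_inj.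
  by rewrite Ha' Hb'.
Qed.

Lemma iota1_val n w : all (valid_gen n) w -> forall j : 'I_n, val (iota1 n w j) = rho1 w (val j).
Proof.
elim: w => [|g w IH] /= Hall j; first by rewrite /iota1 big_nil perm1.
move/andP: Hall => [Hg Hw].
rewrite /iota1 big_cons permM.
have := IH Hw (transp n (gen_idx g) j); rewrite /iota1 => ->.
by rewrite transp_val.
Qed.

Lemma iota2_val n w : all (valid_gen n) w -> forall j : 'I_n, val (iota2 n w j) = tau w (val j).
Proof.
elim: w => [|g w IH] /= Hall j; first by rewrite /iota2 big_nil perm1.
move/andP: Hall => [Hg Hw].
rewrite /iota2 big_cons.
case Hr: (is_rho g).
  rewrite permM.
  have := IH Hw (transp n (gen_idx g) j); rewrite /iota2 => ->.
  by rewrite transp_val // /tau /= Hr.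
have := IH Hw j; rewrite /iota2 => ->.
by rewrite /tau /= ?Hr.
Qed.

Theorem proposition9 (n : nat) (w : seq gen) :
  3 <= n -> all (valid_gen n) w -> in_ker_theta n w ->
  iota1 n w = 1%g /\ iota2 n w = 1%g.
Proof.
move=> _ Hall Hker; split; apply/permP => j; rewrite perm1; apply: val_inj.
- rewrite iota1_val //.
  have := congr1 (wt (fx (val j))) (Hker (false, val j) (ltn_ord j)).
  rewrite abx_theta !wt_cons !wt_nil /sgn /fx /= !addr0 eqxx.
  case: eqP => [E _|_]; last by [].
  by rewrite {1}E rho1_sig.
- rewrite iota2_val //.
  have := Hker (true, val j) (ltn_ord j).
  by rewrite y_theta => -[].
Qed.
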